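(* Let $(M,(I,O))$ be an oriented map with root $h_0$ and backward function $\beta$. Then $(M,(I,O))$ is left-connected if and only if for every half-edge $h$ there exists an integer $q>0$ such that $\beta^q(h)=h_0$.
   Context: A map is $M=(H,\sigma,\alpha)$ with $H$ finite, $\alpha$ a fixed-point-free involution, $\sigma$ a permutation, $\langle\sigma,\alpha\rangle$ transitive, with root $h_0\in H$; $\phi=\sigma\alpha$ (i.e. $\phi(h)=\sigma(\alpha(h))$) is the face-permutation. An orientation is a partition $H=I\uplus O$ with $\alpha(I)=O$. The backward function is $\beta(h)=\sigma(h)$ if $h\in O$ and $\beta(h)=\phi(h)$ if $h\in I$. A left-path is a sequence $h_1,\dots,h_k$ of half-edges in $I$ such that for each $j=1,\dots,k$ there is an integer $q_j>0$ with $h_{j-1}=\sigma^{q_j}(\alpha(h_j))$ and $\sigma^p(\alpha(h_j))\in O$ for all $p=0,\dots,q_j-1$. The oriented map is left-connected if every half-edge in $I$ is the last element of some left-path. *)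

(* Defs.v *)
From mathcomp Require Import all_boot all_fingroup.
Set Implicit Arguments. Unset Strict Implicit. Unset Printing Implicit Defensive.

Section Maps.
Variables (H : finType) (sigma alpha : {perm H}) (h0 : H) (I O : {set H}).

Definition is_map : Prop :=
  [/\ forall h, alpha (alpha h) = h,
      forall h, alpha h != h &
      [transitive <<[set sigma; alpha]>>, on [set: H] | 'P]].

Definition is_orientation : Prop :=
  [/\ I :&: O = set0, I :|: O = [set: H] & alpha @: I = O].

Definition phi (h : H) : H := sigma (alpha h).

Definition beta (h : H) : H := if h \in O then sigma h else phi h.

Definition left_step (hprev h : H) : Prop :=
  exists q : nat, 0 < q /\ hprev = iter q sigma (alpha h) /\
    forall p, p < q -> iter p sigma (alpha h) \in O.

(** s = [h_1; ...; h_k] is a left-path (h_0 being the root) *)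
Definition left_path (s : seq H) : Prop :=
  all (fun h => h \in I) s /\
  forall j, j < size s -> left_step (nth h0 (h0 :: s) j) (nth h0 s j).

Definition left_connected : Prop :=
  forall h, h \in I -> exists s : seq H, [/\ s != [::], left_path s & last h0 s = h].

End Maps.

(* Main.v *)
Require Import Defs.
From mathcomp Require Import all_boot all_fingroup.

Lemma beta_run (H : finType) (sigma alpha : {perm H}) (O : {set H}) (y : H) (d : nat) :
  y \notin O -> (forall p, p < d -> iter p sigma (alpha y) \in O) ->
  forall n, 0 < n <= d -> iter n (beta sigma alpha O) y = iter n sigma (alpha y).
Proof.
move=> yO hp; elim=> [//|n IH] /andP[_ hn].
case: n IH hn => [|n] IH hn.
  by rewrite /= /beta (negbTE yO).
have hn' : 0 < n.+1 <= d by rewrite /= ltnW.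
by rewrite iterS IH // /beta hp // iterS.
Qed.

Lemma beta_run2 (H : finType) (sigma alpha : {perm H}) (O : {set H}) (y : H) (d : nat) :
  y \notin O -> alpha y \in O ->
  (forall n, 0 < n < d -> iter n (beta sigma alpha O) y \in O) ->
  forall n, 0 < n <= d -> iter n (beta sigma alpha O) y = iter n sigma (alpha y).
Proof.
move=> yO ayO hp; elim=> [//|n IH] /andP[_ hn].
case: n IH hn => [|n] IH hn.
  by rewrite /= /beta (negbTE yO).
have hn' : 0 < n.+1 <= d by rewrite /= ltnW.
have hO : iter n.+1 (beta sigma alpha O) y \in O by apply: hp; rewrite /= hn.
rewrite iterS /beta hO IH //; rewrite IH // in hO.
Qed.

Lemma left_path_rcons (H : finType) (sigma alpha : {perm H}) (h0 : H) (I O : {set H})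
  (s : seq H) (x : H) :
  left_path sigma alpha h0 I O (rcons s x) <->
  [/\ x \in I, left_path sigma alpha h0 I O s & left_step sigma alpha O (last h0 s) x].
Proof.
rewrite /left_path all_rcons size_rcons; split.
  case=> /andP[xI aI] hs; split=> //; first split=> //.
    move=> j hj.
    have := hs j (leqW hj).
    rewrite -rcons_cons !nth_rcons /= hj ltnW //.
  have := hs (size s) (ltnSn _).
  rewrite -rcons_cons !nth_rcons /= ltnSn ltnn eqxx.
  by rewrite -[size s]/((size (h0 :: s)).-1) nth_last.
case=> xI [aI hs] hst; split; first by rewrite xI aI.
move=> j; rewrite ltnS leq_eqVlt => /orP[/eqP ->|hj].
  rewrite -rcons_cons !nth_rcons /= ltnSn ltnn eqxx.
  by rewrite -[size s]/((size (h0 :: s)).-1) nth_last.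
rewrite -rcons_cons !nth_rcons /= hj ltnW //; exact: hs.
Qed.

Lemma step_fwd (H : finType) (sigma alpha : {perm H}) (O : {set H}) (x y : H) :
  y \notin O -> left_step sigma alpha O x y ->
  exists d, 0 < d /\ iter d (beta sigma alpha O) y = x.
Proof.
move=> yO [q [q0 [-> hp]]]; exists q; split=> //.
by rewrite (beta_run _ _ _ _ _ _ yO hp) // q0 leqnn.
Qed.

Lemma step_bwd (H : finType) (sigma alpha : {perm H}) (O : {set H}) (y : H) (d : nat) :
  y \notin O -> alpha y \in O -> 0 < d ->
  (forall n, 0 < n < d -> iter n (beta sigma alpha O) y \in O) ->
  left_step sigma alpha O (iter d (beta sigma alpha O) y) y.
Proof.
move=> yO ayO d0 hp; have E := beta_run2 _ _ _ _ _ _ yO ayO hp.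
exists d; split=> //; split; first by apply: E; rewrite d0 leqnn.
case=> [//|p] hpd; rewrite -E; first by apply: hp; rewrite /= hpd.
by rewrite /= ltnW.
Qed.

Lemma fwd (H : finType) (sigma alpha : {perm H}) (h0 : H) (I O : {set H}) :
  I :&: O = set0 -> forall s,
  left_path sigma alpha h0 I O s ->
  exists q, (s != [::] -> 0 < q) /\ iter q (beta sigma alpha O) (last h0 s) = h0.
Proof.
move=> hIO; elim/last_ind => [|s x IH]; first by exists 0.
case/left_path_rcons=> xI hs hst.
have xO : x \notin O.
  apply/negP=> xO; have : x \in I :&: O by rewrite inE xI xO.
  by rewrite hIO inE.
have [d [d0 hd]] := step_fwd _ _ _ _ _ _ xO hst.
have [q [_ hq]] := IH hs.
exists (q + d); split; first by rewrite addn_gt0 d0 orbT.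
by rewrite last_rcons iterD hd.
Qed.

Lemma bwd (H : finType) (sigma alpha : {perm H}) (h0 : H) (I O : {set H}) :
  I :&: O = set0 -> I :|: O = [set: H] -> alpha @: I = O ->
  forall q y, 0 < q -> y \in I -> iter q (beta sigma alpha O) y = h0 ->
  exists s, [/\ s != [::], left_path sigma alpha h0 I O s & last h0 s = y].
Proof.
move=> hIO hU hA; elim/ltn_ind => q IH y q0 yI hq.
have notO : forall z, z \in I -> z \notin O.
  move=> z zI; apply/negP=> zO; have : z \in I :&: O by rewrite inE zI zO.
  by rewrite hIO inE.
have IorO : forall z, z \notin I -> z \in O.
  move=> z zI; have : z \in I :|: O by rewrite hU inE.
  by rewrite inE (negbTE zI).
have ayO : alpha y \in O by rewrite -hA; apply: imset_f.
set B := beta sigma alpha O.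
have exP : exists n, (0 < n) && ((iter n B y \in I) || (n == q)).
  by exists q; rewrite q0 eqxx orbT.
case: (ex_minnP exP) => d /andP[d0 Pd] dmin.
have dq : d <= q by apply: dmin; rewrite q0 eqxx orbT.
have hp : forall n, 0 < n < d -> iter n B y \in O.
  move=> n /andP[n0 nd]; apply: IorO; apply/negP=> nI.
  have := dmin n; rewrite n0 nI /= => /(_ isT); by rewrite leqNgt nd.
have st := step_bwd _ _ _ _ _ _ (notO _ yI) ayO d0 hp.
case: (eqVneq d q) => [edq|ndq].
  exists [:: y]; split=> //; split; first by rewrite /= yI.
  case=> [|//] _ /=; by rewrite -hq -edq.
have dlt : d < q by rewrite ltn_neqAle ndq dq.
have zI : iter d B y \in I by move: Pd; rewrite (negbTE ndq) orbF.
have [s' [s'n hs' ls']] : exists s, [/\ s != [::], left_path sigma alpha h0 I O s & last h0 s = iter d B y].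
  apply: (IH (q - d)); rewrite ?subn_gt0 ?ltn_subrL ?d0 ?q0 //.
  by rewrite -iterD subnK // ltnW.
exists (rcons s' y); split; first by case: (s').
  by apply/left_path_rcons; split=> //; rewrite ls'.
by rewrite last_rcons.
Qed.

Theorem mainTheorem9 (H : finType) (sigma alpha : {perm H}) (h0 : H)
  (I O : {set H}) :
  is_map sigma alpha -> is_orientation alpha I O ->
  left_connected sigma alpha h0 I O <->
  (forall h : H, exists q : nat, 0 < q /\ iter q (beta sigma alpha O) h = h0).
Proof.
case=> inv _ _ [hIO hU hA]; split.
- move=> LC.
  have hI : forall h, h \in I -> exists q, 0 < q /\ iter q (beta sigma alpha O) h = h0.
    move=> h hI; have [s [sn hs ls]] := LC h hI.
    have [q [q0 hq]] := fwd _ _ _ h0 _ _ hIO _ hs.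
    by exists q; split; [apply: q0 | rewrite -ls].
  move=> h; have : h \in I :|: O by rewrite hU inE.
  rewrite inE => /orP[/hI //|hO].
  have : h \in alpha @: I by rewrite hA.
  case/imsetP=> y yI ehy.
  have [q [q0 hq]] := hI y yI; exists q; split=> //.
  case: q q0 hq => [//|q] _; rewrite !iterSr => <-.
  have yO : y \notin O.
    apply/negP=> yO; have : y \in I :&: O by rewrite inE yI yO.
    by rewrite hIO inE.
  by rewrite /beta hO (negbTE yO) /phi ehy.
- move=> R h hI; have [q [q0 hq]] := R h.
  exact: (bwd _ _ _ h0 _ _ hIO hU hA _ _ q0 hI hq).
Qed.
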